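(* Let $p\in[1,\infty)$ and $\rho\in\mathfrak M_+(\mathsf X\times\mathsf X)$. Let $E_0\subseteq\mathsf X$ be $\mathfrak m$-measurable, $(\mathsf Y,\mathsf d_{\mathsf Y})$ a metric space, $f\in\mathfrak M(E_0,\mathsf Y)$, and $E\Subset E_0$ $\mathfrak m$-measurable. Suppose there is $R>0$ with $\mathrm B(E,R)\subseteq E_0$ and a function $G:E_0\times(0,R]\to[0,+\infty]$ such that: (i) for every $r\in(0,R]$, $G(\cdot,r)$ is $\mathfrak m$-measurable; (ii) there is $C>0$ such that for every $r\in(0,R]$, for $\mathfrak m$-a.e. $x\in E_0$, $\sup_{r'\in[r/2,r]}G(x,r')\le C\,G(x,r)$; (iii) there is $D\subseteq E_0\times E_0$ with $(\mathfrak m\otimes\mathfrak m)((E_0\times E_0)\setminus D)=0$ such that for all $(x,x')\in D$ with $x\in E$ and $x'\in\mathrm B(x,R)\setminus\{x\}$, $(\mathsf Q_f(x,x'))^p\le G(x,\mathsf d(x,x'))+G(x',\mathsf d(x,x'))$. Then for every $r\in(0,R]$, \[ \int_E\int_{\mathrm B(x,r)}(\mathsf Q_f(x,x'))^p\rho(x,x')\,\mathrm d\mathfrak m(x')\,\mathrm d\mathfrak m(x)\le C\,\mathcal I^U_{E,r}[\rho]\sup_{r'\in(0,r]}\int_{E_0}G(x,r')\,\mathrm d\mathfrak m(x). \]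
   Context: $(\mathsf X,\mathsf d)$ is a locally complete separable metric space of positive diameter with a locally finite Borel outer measure $\mathfrak m$, $\mathfrak m(\mathsf X)>0$. Conventions $0\cdot(+\infty)=0/0=0$. Closed balls $\mathrm B(x,r)=\{x':\mathsf d(x,x')\le r\}$, $\mathrm B(S,r)=\{x':\operatorname{dist}(S,\{x'\})\le r\}$; $\mathrm A(x,\tau)=\{x':\mathsf d(x,x')\in\tau\}$. $S\Subset S_0$ means $S\subseteq S_0$ and $\operatorname{dist}(S,\mathsf X\setminus S_0)>0$. $\mathfrak M(E,\mathsf Y)$: $\mathfrak m$-measurable maps $E\to\mathsf Y$ separably valued off an $\mathfrak m$-null set. $\mathfrak M_+(\mathsf X\times\mathsf X)$: $(\mathfrak m\otimes\mathfrak m)$-measurable functions into $[0,+\infty]$. $\mathsf Q_f(x,x')=\mathsf d_{\mathsf Y}(f(x),f(x'))/\mathsf d(x,x')$ for $x\ne x'$, $0$ for $x=x'$. For $r>0$, $\mathcal P^U_r$ is the set of sequences $(\tau_k)_{k\in\mathbb N_0}$ of nonempty intervals in $(0,r]$ with $\sup\tau_k\le2\inf\tau_k$ and $(0,r]\subseteq\bigcup_k\tau_k$; for $S\subseteq\mathsf X$, $\mathcal I^U_{S,r}[\rho,\tau_\bullet]=\sum_k\operatorname{ess\,sup}_{x\in\mathrm B(S,\sup\tau_k)}\int_{\mathrm A(x,\tau_k)}(\rho(x,x')+\rho(x',x))\,\mathrm d\mathfrak m(x')$ (ess sup w.r.t. $\mathfrak m$) and $\mathcal I^U_{S,r}[\rho]=\inf_{\tau_\bullet\in\mathcal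 P^U_r}\mathcal I^U_{S,r}[\rho,\tau_\bullet]$. *)

(* Defs.v *)
From HB Require Import structures.
From mathcomp Require Import all_boot all_order all_algebra.
From mathcomp Require Import all_classical all_reals all_analysis.
From mathcomp Require Import measurable_realfun.

Import Order.TTheory GRing.Theory Num.Theory.
Import numFieldNormedType.Exports.

Local Open Scope classical_set_scope.
Local Open Scope ring_scope.

Section metric_defs.
Context {R : realType} {T : Type}.

Record is_metric (dist : T -> T -> R) : Prop := IsMetric {
  metric_ge0 : forall x y, 0 <= dist x y;
  metric_eq0 : forall x y, dist x y = 0 <-> x = y;
  dmetric_sym : forall x y, dist x y = dist y x;
  metric_tri : forall x y z, dist x z <= dist x y + dist y z }.

Variable dist : T -> T -> R.

Definition dopen (U : set T) : Prop :=
  forall x, U x -> exists e : R, 0 < e /\ [set y | dist x y < e] `<=` U.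

Definition cball (x : T) (r : R) : set T := [set y | dist x y <= r].

(** dist(S,{x}) in [0,+oo] (= +oo when S is empty) *)
Definition dist_set (S : set T) (x : T) : \bar R :=
  ereal_inf [set (dist s x)%:E | s in S].

Definition cballS (S : set T) (r : R) : set T :=
  [set x | (dist_set S x <= r%:E)%E].

Definition annulus (x : T) (tau : set R) : set T := [set y | tau (dist x y)].

Definition dist_sets (S1 S2 : set T) : \bar R :=
  ereal_inf [set (dist a b)%:E | a in S1 & b in S2].

Definition relcompact_in (S S0 : set T) : Prop :=
  S `<=` S0 /\ (0%:E < dist_sets S (~` S0))%E.

Definition dcauchy (u : nat -> T) : Prop :=
  forall e : R, 0 < e -> exists N, forall n k, (N <= n)%N -> (N <= k)%N ->
    dist (u n) (u k) < e.

Definition dconverges (u : nat -> T) (l : T) : Prop :=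
  forall e : R, 0 < e -> exists N, forall n, (N <= n)%N -> dist (u n) l < e.

Definition locally_complete : Prop :=
  forall x, exists r : R, 0 < r /\
    forall u : nat -> T, (forall n, cball x r (u n)) -> dcauchy u ->
      exists l, cball x r l /\ dconverges u l.

Definition separable_set (S : set T) : Prop :=
  exists s : nat -> T, forall x, S x ->
    forall e : R, 0 < e -> exists n, dist x (s n) < e.

Definition positive_diameter : Prop := exists x y, 0 < dist x y.

End metric_defs.

Definition is_interval_set {R : realType} (t : set R) : Prop :=
  t !=set0 /\ forall a b c, t a -> t b -> a <= c <= b -> t c.

Definition PU {R : realType} (r : R) (tau : nat -> set R) : Prop :=
  (forall k, [/\ is_interval_set (tau k), tau k `<=` `]0, r] &
                 sup (tau k) <= 2 * inf (tau k)]) /\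
  `]0, r] `<=` \bigcup_k tau k.

Section measure_defs.
Context {R : realType} {T : pointedType}.
Variable m : {outer_measure set T -> \bar R}.

Definition cmeas : set (caratheodory_type m) -> \bar R := m.

Definition mmeasurable (A : set T) : Prop :=
  measurable (A : set (caratheodory_type m)).

Definition prod_null (A : set (T * T)) : Prop :=
  exists N : set (caratheodory_type m * caratheodory_type m),
    [/\ measurable N, A `<=` N & (cmeas \x cmeas)%E N = 0%E].

(** M_+(X × X): (m ⊗ m)-measurable [0,+oo]-valued functions
    (measurable for the completion of the product sigma-algebra) *)
Definition MplusXX (rho : T -> T -> \bar R) : Prop :=
  (forall x y, (0 <= rho x y)%E) /\
  exists g : caratheodory_type m * caratheodory_type m -> \bar R,
    measurable_fun setT g /\
    prod_null [set z | rho z.1 z.2 <> g z].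

Definition Mmaps {Y : Type} (dY : Y -> Y -> R) (E : set T) (f : T -> Y) : Prop :=
  (forall U : set Y, dopen dY U -> mmeasurable (E `&` f @^-1` U)) /\
  exists N : set T, m N = 0%E /\ separable_set dY (f @` (E `\` N)).

Definition esssup_on (A : set T) (h : T -> \bar R) : \bar R :=
  ereal_inf [set t | (0 <= t)%E /\ m [set x | A x /\ (t < h x)%E] = 0%E].

Variable dX : T -> T -> R.

Definition IU_tau (S : set T) (rho : T -> T -> \bar R) (tau : nat -> set R)
  : \bar R :=
  (\sum_(k <oo) esssup_on (cballS dX S (sup (tau k)))
     (fun x => \int[cmeas]_(x' in annulus dX x (tau k)) (rho x x' + rho x' x)))%E.

Definition IU (S : set T) (r : R) (rho : T -> T -> \bar R) : \bar R :=
  ereal_inf [set IU_tau S rho tau | tau in PU r].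

End measure_defs.

Definition Qf {R : realType} {T Y : Type} (dX : T -> T -> R) (dY : Y -> Y -> R)
  (f : T -> Y) (x x' : T) : R :=
  if `[< x = x' >] then 0 else dY (f x) (f x') / dX x x'.

(* Main.v *)
Require Import Defs.
From HB Require Import structures.
From mathcomp Require Import all_boot all_order all_algebra.
From mathcomp Require Import all_classical all_reals all_analysis.
From mathcomp Require Import measurable_realfun.
From mathcomp Require Import lra.
Import Order.TTheory GRing.Theory Num.Theory.
Import numFieldNormedType.Exports.
Local Open Scope classical_set_scope.
Local Open Scope ring_scope.


Local Open Scope ereal_scope.
Import HBNNSimple.

Lemma int_le_ae d (T : measurableType d) (R : realType)
  (mu : {measure set T -> \bar R}) (D : set T) (F Phi : T -> \bar R) :
  measurable D -> measurable_fun D Phi ->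
  (forall x, D x -> 0 <= F x) -> (forall x, D x -> 0 <= Phi x) ->
  {ae mu, forall x, D x -> F x <= Phi x} ->
  \int[mu]_(x in D) F x <= \int[mu]_(x in D) Phi x.
Proof.
move=> mD mP F0 P0 aeFP.
rewrite (ge0_integralE _ F0) (integral_mkcond D Phi).
apply: ge_ereal_sup => _ [h /= hF <-].
rewrite -integralT_nnsfun.
apply: ae_ge0_le_integral => //.
- by move=> x _; rewrite lee_fin; exact: fun_ge0.
- by apply/measurable_EFinP; exact: measurable_funPT.
- by move=> x _; apply: erestrict_ge0.
- exact/(measurable_restrictT _ _).1.
- apply: filterS aeFP => x FP _; have := hF x; rewrite !patchE; case: ifPn => xD.
    by move=> hx; apply: le_trans hx _; apply: FP; rewrite inE in xD.
  by [].
Qed.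

Lemma nneseries_ge_term (R : realType) (f : nat -> \bar R) n :
  (forall k, 0 <= f k) -> f n <= \sum_(k <oo) f k.
Proof.
move=> f0; rewrite (@nneseriesD1 _ f n xpredT) //.
by rewrite leeDl // nneseries_ge0.
Qed.

Lemma ae_bigcup d (T : measurableType d) (R : realType)
  (mu : {measure set T -> \bar R}) (P : nat -> T -> Prop) :
  (forall n, {ae mu, forall x, P n x}) -> {ae mu, forall x, forall n, P n x}.
Proof.
move=> aeP.
have : mu.-negligible (\bigcup_n ~` [set x | P n x]).
  by apply: negligible_bigcup => n; exact: aeP.
apply: negligibleS => x /= nP; apply: contrapT => hx; apply: nP => n.
by apply: contrapT => Pn; apply: hx; exists n.
Qed.

Lemma nneseries_mulr (R : realType) (u : nat -> \bar R) (c : \bar R) :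
  (forall k, 0 <= u k) -> 0 <= c ->
  \sum_(k <oo) (u k * c) <= (\sum_(k <oo) u k) * c.
Proof.
move=> u0; case: c => [s| |] // c0.
- rewrite (@eq_eseriesr _ (fun k => u k * s%:E) (fun k => s%:E * u k)); last first.
    by move=> i _; rewrite muleC.
  by rewrite nneseriesZl // muleC.
- have [h|h] := eqVneq (\sum_(k <oo) u k) 0.
    have uk k : u k = 0.
      by apply/eqP; rewrite eq_le u0 andbT -h nneseries_ge_term.
    rewrite (@eq_eseriesr _ (fun k => u k * +oo) (fun k => 0)); last first.
      by move=> i _; rewrite uk mul0e.
    by rewrite eseries0 // h mul0e.
  by rewrite muleC gt0_mulye ?leey // lt0e h nneseries_ge0.
Qed.

Local Open Scope ereal_scope.

Lemma exists_natSinv (R : realType) (e : R) : (0 < e)%R ->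
  exists n : nat, (n.+1%:R^-1 < e)%R.
Proof.
move=> e0; have [N _ /(_ N)/(_ (leqnn _)) Ndel] := near_infty_natSinv_lt (PosNum e0).
by exists N.
Qed.

Section cara.
Context (R : realType) (T : pointedType) (m : {outer_measure set T -> \bar R}).
Local Notation U := (caratheodory_type m).
Local Notation mu := (m : set U -> \bar R).

Lemma null_meas (N : set U) : m N = 0 -> measurable N.
Proof.
move=> N0; apply: le_caratheodory_measurable => X.
have -> : m (X `&` N) = 0.
  apply/eqP; rewrite eq_le outer_measure_ge0 andbT -N0.
  by apply: le_outer_measure; apply: subIsetr.
by rewrite add0e; apply: le_outer_measure; apply: subIsetl.
Qed.

Lemma null_ae (P : U -> Prop) : m [set x | ~ P x] = 0 -> {ae mu, forall x, P x}.
Proof.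
move=> h; exists [set x | ~ P x]; split => //; exact: null_meas.
Qed.

Lemma ae_null (P : U -> Prop) : {ae mu, forall x, P x} ->
  exists N : set U, m N = 0 /\ forall x, ~ N x -> P x.
Proof.
case=> N [mN N0 sN]; exists N; split => // x Nx; apply: contrapT => Px.
by apply: Nx; apply: sN.
Qed.

Lemma null_ae' (N : set U) : m N = 0 -> {ae mu, forall x, ~ N x}.
Proof.
move=> N0; apply: null_ae; rewrite (_ : [set x | ~ ~ N x] = N) //.
by apply/seteqP; split => x /=; [exact: contrapT|move=> ? ?].
Qed.

Lemma int_ae_eq (D : set U) (F Phi : U -> \bar R) :
  measurable D -> measurable_fun D Phi ->
  {ae mu, forall x, D x -> Phi x = F x} ->
  \int[mu]_(x in D) F x = \int[mu]_(x in D) Phi x.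
Proof.
move=> mD mP ae.
have mF : measurable_fun D F.
  have cm := @measure_is_complete_caratheodory _ _ m.
  have := @ae_measurable_fun _ _ _ mu cm D Phi F. move=> /(_ ae mP). exact.
apply: ae_eq_integral => //.
by apply: filterS ae => x h Dx; rewrite h.
Qed.

Lemma esssup_attained (A : set U) (h : U -> \bar R) :
  m [set x | A x /\ esssup_on m A h < h x] = 0.
Proof.
pose S := [set t : \bar R | 0 <= t /\ m [set x | A x /\ t < h x] = 0].
rewrite /esssup_on -/S.
have e0 : 0 <= ereal_inf S.
  by apply: le_ereal_inf_tmp => t [].
move: e0; case E : (ereal_inf S) => [s| |] // e0.
- have /choice[t ht] : forall n : nat, exists t, S t /\ t < (s + n.+1%:R^-1)%:E.
    move=> n; have : ereal_inf S < (s + n.+1%:R^-1)%:E.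
      by rewrite E lte_fin ltrDl invr_gt0.
    by case/ereal_inf_lt => t St tl; exists t.
  apply/eqP; rewrite eq_le outer_measure_ge0 andbT.
  apply: (le_trans (le_outer_measure m _ (\bigcup_n [set x | A x /\ t n < h x]) _)).
    move=> x [Ax sx]; move: sx; case hx : (h x) => [y| |] // sy.
      have : (0 < y - s)%R by rewrite subr_gt0 -lte_fin.
      move=> /exists_natSinv[n hn]; exists n => //; split => //.
      rewrite hx (lt_trans (ht n).2)// lte_fin -ltrBrDl; exact: hn.
    by exists 0%N => //; split => //; rewrite hx; apply: (lt_le_trans (ht 0%N).2); rewrite leey.
  apply: (le_trans (outer_measure_sigma_subadditive m _)).
  by rewrite eseries0 // => n _ _; case: (ht n) => -[_ ->].
- apply/eqP; rewrite eq_le outer_measure_ge0 andbT.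
  rewrite (_ : [set x | _] = set0) ?outer_measure0 //.
  by apply/seteqP; split => x //= [_]; rewrite ltNge leey.
Qed.

End cara.

Local Open Scope ereal_scope.

Section metric.
Context (R : realType) (T : pointedType) (dX : T -> T -> R).
Hypothesis hdX : is_metric dX.
Let dtri := metric_tri _ hdX.
Let dsym := dmetric_sym _ hdX.
Let dge0 := metric_ge0 _ hdX.
Let deq0 := metric_eq0 _ hdX.

Lemma dopen_ball x e : dopen dX [set y | (dX x y < e)%R].
Proof.
move=> y /= hy; exists (e - dX x y)%R; split; first by rewrite subr_gt0.
move=> z /= hz; apply: (le_lt_trans (dtri x y z)).
by rewrite -ltrBrDl.
Qed.

Lemma dopen_cballC x r : dopen dX (~` cball dX x r).
Proof.
move=> y /= hy; have hy' : (r < dX x y)%R by rewrite ltNge; apply/negP.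
exists (dX x y - r)%R; split; first by rewrite subr_gt0.
move=> z /= hz; rewrite /cball /= => hzr.
have := dtri x z y; rewrite (dsym z y) => h2.
lra.
Qed.

Section meas.
Context (m : {outer_measure set T -> \bar R}).
Hypothesis hborel : forall A, dopen dX A -> mmeasurable m A.
Hypothesis hsep : separable_set dX setT.
Hypothesis hlocfin : forall x, exists r : R, (0 < r)%R /\ (m (cball dX x r) < +oo)%E.
Local Notation U := (caratheodory_type m).
Local Notation mu := (m : set U -> \bar R).

Lemma meas_ball x e : measurable ([set y | (dX x y < e)%R] : set U).
Proof. exact/hborel/dopen_ball. Qed.

Lemma meas_cball x r : measurable (cball dX x r : set U).
Proof.
rewrite -(setCK (cball dX x r)); apply: measurableC.
exact/hborel/dopen_cballC.
Qed.

Lemma meas_dist : measurable_fun (setT : set (U * U)) (fun z => dX z.1 z.2).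
Proof.
apply: (measurability (@RGenInftyO.G R)); first exact: RGenInftyO.measurableE.
move=> _ [_ [t ->] <-].
case: hsep => s hs.
rewrite (_ : _ `&` _ = \bigcup_n \bigcup_j
   (([set y | (dX (s n) y < j.+1%:R^-1)%R] : set U) `*`
    ([set y | (dX (s n) y < t - 2 * j.+1%:R^-1)%R] : set U))).
  apply: bigcupT_measurable => n; apply: bigcupT_measurable => j.
  by apply: measurableX; apply: meas_ball.
apply/seteqP; split.
- move=> [x y] /= [_]; rewrite in_itv /= => hxy.
  have : (0 < (t - dX x y) / 3)%R by apply: divr_gt0; lra.
  move=> /exists_natSinv[j hj].
  have hj0 : (0 < j.+1%:R^-1 :> R)%R by rewrite invr_gt0.
  have [n hn] := hs x I _ hj0.
  exists n => //; exists j => //; split => /=; first by rewrite dsym.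
  have := dtri (s n) x y; rewrite (dsym (s n) x).
  move: hj hj0 hn; set a := (j.+1%:R^-1 : R)%R; move=> hj hj0 hn.
  have hj3 : (3 * a < t - dX x y)%R by rewrite mulrC -ltr_pdivlMr.
  lra.
- move=> [x y] [n _ [j _ [/= h1 h2]]]; split => //=; rewrite in_itv /=.
  have hj0 : (0 < j.+1%:R^-1 :> R)%R by rewrite invr_gt0.
  have := dtri x (s n) y; rewrite (dsym x (s n)); move: h1 h2 hj0; set a := (j.+1%:R^-1 : R)%R; lra.
Qed.

Lemma sigma_fin : sigma_finite setT mu.
Proof.
case: hsep => s hs.
pose B (p : nat * nat) : set U := cball dX (s p.1) p.2.+1%:R^-1.
pose F (k : nat) : set U := match (unpickle k : option (nat * nat)) with
  | Some p => [set y | B p y /\ (m (B p) < +oo)%E]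
  | None => set0 end.
exists F.
  apply/seteqP; split => // x _.
  have [r [r0 hr]] := hlocfin x.
  have : (0 < r / 2)%R by apply: divr_gt0.
  move=> /exists_natSinv[j hj].
  have hj0 : (0 < j.+1%:R^-1 :> R)%R by rewrite invr_gt0.
  have [n hn] := hs x I _ hj0.
  exists (pickle (n, j)) => //; rewrite /F pickleK /B /=; split.
    by rewrite /cball /= dsym; apply: ltW.
  apply: le_lt_trans hr; apply: le_outer_measure => y; rewrite /cball /=.
  have := dtri x (s n) y; move: hj hj0 hn; set a := (j.+1%:R^-1 : R)%R => hj hj0 hn.
  have hj2 : (2 * a < r)%R by rewrite mulrC -ltr_pdivlMr.
  lra.
move=> k; rewrite /F; case: (unpickle k) => [p|]; last by split => //; rewrite outer_measure0.
case: (pselect (m (B p) < +oo)%E) => hp.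
  rewrite (_ : [set y | _] = B p); first by split => //; exact: meas_cball.
  by apply/seteqP; split => y //= [].
rewrite (_ : [set y | _] = set0); first by split => //; rewrite outer_measure0.
by apply/seteqP; split => y //= [].
Qed.

End meas.

End metric.

Local Open Scope ereal_scope.
Import HBNNSimple.

Section main.
Context (R : realType) (T : pointedType) (dX : T -> T -> R)
  (m : {outer_measure set T -> \bar R}).
Hypothesis sfin : sigma_finite setT (m : set (caratheodory_type m) -> \bar R).
HB.instance Definition _ := Measure_isSigmaFinite.Build _ _ _
  (m : set (caratheodory_type m) -> \bar R) sfin.
Hypothesis hdX : is_metric dX.
Hypothesis hsep : separable_set dX setT.
Hypothesis hborel : forall U, dopen dX U -> mmeasurable m U.
Hypothesis hlocfin : forall x, exists r : R, (0 < r)%R /\ (m (cball dX x r) < +oo)%E.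
Context (p : R) (hp : (1 <= p)%R) (rho : T -> T -> \bar R) (hrho : MplusXX m rho)
  (E0 : set T) (hE0 : mmeasurable m E0) (Y : Type) (dY : Y -> Y -> R)
  (hdY : is_metric dY) (f : T -> Y) (E : set T) (hE : mmeasurable m E)
  (hEE0 : relcompact_in dX E E0) (Rr : R) (hRr : (0 < Rr)%R)
  (hBE : cballS dX E Rr `<=` E0) (G : T -> R -> \bar R)
  (hG0 : forall (x : T) (r : R), E0 x -> (0 < r <= Rr)%R -> (0 <= G x r)%E)
  (hGi : forall r : R, (0 < r <= Rr)%R ->
     measurable_fun (E0 : set (caratheodory_type m))
       (fun x : caratheodory_type m => G x r))
  (C : R) (hC : (0 < C)%R)
  (hGii : forall r : R, (0 < r <= Rr)%R ->
     m [set x | E0 x /\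
        ~ (ereal_sup [set G x r' | r' in `[(r / 2)%R, r%R]] <= C%:E * G x r)%E]
     = 0%E)
  (hGiii : exists D : set (T * T),
     [/\ D `<=` E0 `*` E0, prod_null m ((E0 `*` E0) `\` D) &
         forall x x', D (x, x') -> E x -> cball dX x Rr x' -> x' <> x ->
           (((Qf dX dY f x x') `^ p)%:E <= G x (dX x x') + G x' (dX x x'))%E])
  (r : R) (hr : (0 < r <= Rr)%R).

Local Notation U := (caratheodory_type m).
Local Notation mu := (m : set U -> \bar R).

Lemma prod_null_x (A : set (T * T)) : prod_null m A ->
  {ae mu, forall x : U, m (xsection A x) = 0}.
Proof.
case=> N [mN AN N0].
have mphi : measurable_fun setT (mu \o xsection N) := measurable_fun_xsection mu mN.
have : \int[mu]_x `|(mu \o xsection N) x| = 0.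
  rewrite -N0 /product_measure1 /cmeas; apply: eq_integral => x _.
  by rewrite gee0_abs //= outer_measure_ge0.
move/(ae_eq_integral_abs _ measurableT mphi).
apply: filterS => x /(_ I) /= h0.
apply/eqP; rewrite eq_le outer_measure_ge0 andbT -h0.
apply: le_outer_measure => y; rewrite /xsection /= !inE; exact: AN.
Qed.

Lemma prod_null_y (A : set (T * T)) : prod_null m A ->
  {ae mu, forall y : U, m (ysection A y) = 0}.
Proof.
case=> N [mN AN N0].
have mphi : measurable_fun setT (mu \o ysection N) := measurable_fun_ysection mu mN.
have N0' : (mu \x^ mu) N = 0.
  rewrite -N0 /cmeas; apply/esym/product_measure_unique => // A1 A2 mA1 mA2.
  by rewrite /= product_measure2E.
have : \int[mu]_x `|(mu \o ysection N) x| = 0.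
  rewrite -N0' /product_measure2; apply: eq_integral => x _.
  by rewrite gee0_abs //= outer_measure_ge0.
move/(ae_eq_integral_abs _ measurableT mphi).
apply: filterS => x /(_ I) /= h0.
apply/eqP; rewrite eq_le outer_measure_ge0 andbT -h0.
apply: le_outer_measure => y; rewrite /ysection /= !inE; exact: AN.
Qed.


Let nae {N : set U} (h : m N = 0) := @null_ae' R T m N h.
Let dtri := metric_tri _ hdX.
Let dsym := dmetric_sym _ hdX.
Let dge0 := metric_ge0 _ hdX.
Let deq0 := metric_eq0 _ hdX.
Let rho0 : forall x y, 0 <= rho x y := hrho.1.
Let g : U * U -> \bar R := sval (cid hrho.2).
Let mg : measurable_fun setT g := (svalP (cid hrho.2)).1.
Let ng : prod_null m [set z | rho z.1 z.2 <> g z] := (svalP (cid hrho.2)).2.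
Let g' (z : U * U) : \bar R := maxe (g z) 0.
Lemma mg' : measurable_fun setT g'.
Proof. by apply: measurable_maxe => //; exact: measurable_cst. Qed.
Lemma g'0 z : 0 <= g' z.
Proof. by rewrite /g' le_max lexx orbT. Qed.
Lemma g'rho x y : rho x y = g (x, y) -> g' (x, y) = rho x y.
Proof. by move=> h; rewrite /g' -h max_l // rho0. Qed.

Let Dset : set (T * T) := sval (cid hGiii).
Let hD := svalP (cid hGiii).

Lemma mdist : measurable_fun (setT : set (U * U)) (fun z => dX z.1 z.2).
Proof. exact: (@meas_dist R T dX hdX m hborel hsep). Qed.

Lemma mcball x rr : measurable (cball dX x rr : set U).
Proof. exact: (@meas_cball R T dX hdX m hborel). Qed.

Lemma mdist_x (x : U) : measurable_fun (setT : set U) (fun y => dX x y).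
Proof. exact: (measurable_fun_pair2 x mdist). Qed.

Lemma r0 : (0 < r)%R. Proof. by case/andP: hr. Qed.
Lemma rRr : (r <= Rr)%R. Proof. by case/andP: hr. Qed.

Definition Ssup := ereal_sup [set \int[cmeas m]_(x in E0) G x r' | r' in `]0%R, r%R]].

Definition Bx (x : U) : set U := (fun y : U => dX x y) @^-1` `]0%R, r%R]%classic.

Lemma mBx x : measurable (Bx x).
Proof. by have := mdist_x x measurableT _ (measurable_itv `]0%R, r%R]); rewrite setTI. Qed.

Section tau.
Variable tau : nat -> set R.
Hypothesis htau : PU r tau.

Definition rk k := sup (tau k).

Lemma tau_sub k : tau k `<=` `]0%R, r%R]. Proof. by case: (htau.1 k). Qed.

Lemma tau_hassup k : has_sup (tau k).
Proof.
case: (htau.1 k) => -[ne _] sub _; split => //.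
by exists r => t /sub; rewrite /= in_itv /= => /andP[].
Qed.

Lemma tau_hasinf k : has_lbound (tau k).
Proof. by exists 0%R => t /tau_sub; rewrite /= in_itv /= => /andP[/ltW]. Qed.

Lemma tau_le_rk k t : tau k t -> (t <= rk k)%R.
Proof. by move=> h; apply: sup_upper_bound => //; exact: tau_hassup. Qed.

Lemma rk_ge k t : tau k t -> (rk k / 2 <= t)%R.
Proof.
move=> h; case: (htau.1 k) => _ _ hs.
have : (inf (tau k) <= t)%R by apply: ge_inf => //; exact: tau_hasinf.
rewrite /rk; lra.
Qed.

Lemma rk_pos k : (0 < rk k)%R /\ (rk k <= r)%R.
Proof.
case: (htau.1 k) => -[ne _] sub _; case: (ne) => t tt; split.
  have h1 := @tau_le_rk k t tt.
  have := sub _ tt; rewrite /= in_itv /= => /andP[h2 _].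
  exact: (lt_le_trans h2 h1).
apply: ge_sup; first exact: ne.
by move=> s /sub; rewrite /= in_itv /= => /andP[_].
Qed.

Lemma tau_cover t : (0 < t <= r)%R -> exists k, tau k t.
Proof.
move=> h; have : (`]0%R, r%R]%classic : set R) t by rewrite /= in_itv /=.
by move/(htau.2) => [k _ hk]; exists k.
Qed.

Lemma tau_meas k : measurable (tau k).
Proof.
apply: is_interval_measurable => a b ha hb c hc.
by case: (htau.1 k) => -[_ hi] _ _; apply: (hi a b c).
Qed.


Definition Gk k : U -> \bar R := (fun x => G x (rk k)) \_ E0.

Lemma rk_Rr k : (0 < rk k <= Rr)%R.
Proof. have [h1 h2] := rk_pos k; rewrite h1 /=; exact: (le_trans h2 rRr). Qed.

Lemma Gk0 k x : 0 <= Gk k x.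
Proof.
rewrite /Gk patchE; case: ifPn => // /set_mem h; exact: hG0 h (rk_Rr k).
Qed.

Lemma mGk k : measurable_fun setT (Gk k).
Proof. by apply/(measurable_restrictT _ _).1 => //; exact: hGi (rk_Rr k). Qed.

Definition Ak k : set (U * U) := [set z | tau k (dX z.1 z.2)].

Lemma mAk k : measurable (Ak k).
Proof. by have := mdist measurableT _ (tau_meas k); rewrite setTI. Qed.

Definition Ek k : set (U * U) := ((E : set U) `*` setT) `&` Ak k.

Lemma mEk k : measurable (Ek k).
Proof. by apply: measurableI; [apply: measurableX|exact: mAk]. Qed.

Definition Pa k (z : U * U) := (\1_(Ek k) z)%:E * (Gk k z.1 * g' z).
Definition Pb k (z : U * U) := (\1_(Ek k) z)%:E * (Gk k z.2 * g' z).
Definition Psi (z : U * U) := \sum_(k <oo) (Pa k z + Pb k z).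

Lemma Pa0 k z : 0 <= Pa k z.
Proof. by rewrite /Pa mule_ge0 // ?lee_fin // mule_ge0 // ?Gk0 // g'0. Qed.
Lemma Pb0 k z : 0 <= Pb k z.
Proof. by rewrite /Pb mule_ge0 // ?lee_fin // mule_ge0 // ?Gk0 // g'0. Qed.
Lemma Psi0 z : 0 <= Psi z.
Proof. by apply: nneseries_ge0 => k _ _; rewrite adde_ge0 // ?Pa0 // Pb0. Qed.

Lemma mPa k : measurable_fun setT (Pa k).
Proof.
apply: emeasurable_funM.
  by apply/measurable_EFinP; apply: measurable_indic; exact: mEk.
apply: emeasurable_funM; last exact: mg'.
exact: (measurableT_comp (mGk k) measurable_fst).
Qed.

Lemma mPb k : measurable_fun setT (Pb k).
Proof.
apply: emeasurable_funM.
  by apply/measurable_EFinP; apply: measurable_indic; exact: mEk.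
apply: emeasurable_funM; last exact: mg'.
exact: (measurableT_comp (mGk k) measurable_snd).
Qed.

Lemma mPsi : measurable_fun setT Psi.
Proof.
have := @ge0_emeasurable_sum _ _ _ setT (fun k z => Pa k z + Pb k z) xpredT.
apply.
  by move=> k z _ _; rewrite adde_ge0 // ?Pa0 // Pb0.
by move=> k _; apply: emeasurable_funD; [exact: mPa|exact: mPb].
Qed.

Definition N3 : set U := \bigcup_k [set x | E0 x /\
  ~ (ereal_sup [set G x r' | r' in `[(rk k / 2)%R, (rk k)%R]] <= C%:E * G x (rk k))%E].

Lemma N3_0 : m N3 = 0.
Proof.
apply/eqP; rewrite eq_le outer_measure_ge0 andbT.
apply: (le_trans (outer_measure_sigma_subadditive m _)).
by rewrite eseries0 // => k _ _; exact: hGii (rk_Rr k).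
Qed.

Lemma pw_bound (x y : U) : E x -> cball dX x r y -> ~ N3 x -> ~ N3 y ->
  ~ ((E0 `*` E0) `\` Dset) (x, y) -> rho x y = g (x, y) ->
  ((Qf dX dY f x y) `^ p)%:E * rho x y <= C%:E * Psi (x, y).
Proof.
move=> Ex bxy nx ny nD hg.
have Psi0' := Psi0 (x, y).
have C0 : 0 <= C%:E by rewrite lee_fin ltW.
case: (pselect (y = x)) => [->|yx].
  rewrite /Qf asboolT // powR0 ?mul0e ?mule_ge0 // ?Psi0 //.
  by apply/eqP => h; move: hp; rewrite h; lra.
have E0x : E0 x := hEE0.1 x Ex.
have dpos : (0 < dX x y)%R.
  rewrite lt_neqAle dge0 andbT; apply/eqP => h; apply: yx; symmetry.
  by apply/deq0; rewrite -h.
have dr : (dX x y <= r)%R := bxy.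
have E0y : E0 y.
  apply: hBE; rewrite /cballS /dist_set /=; apply: ge_ereal_inf.
  exists (dX x y)%:E; first by exists x.
  by rewrite lee_fin (le_trans dr rRr).
have [k hk] : exists k, tau k (dX x y) by apply: tau_cover; rewrite dpos dr.
have h1 := @rk_ge k _ hk; have h2 := @tau_le_rk k _ hk.
have Dxy : Dset (x, y) by apply: contrapT => nDxy; apply: nD; split.
case: hD => _ _ hQ.
have := hQ x y Dxy Ex (le_trans dr rRr) yx => hQxy.
have gle z : E0 z -> ~ N3 z -> G z (dX x y) <= C%:E * G z (rk k).
  move=> E0z nz; have hs : (ereal_sup [set G z r' | r' in `[(rk k / 2)%R, (rk k)%R]]
      <= C%:E * G z (rk k)).
    by apply: contrapT => hn; apply: nz; exists k.
  apply: le_trans hs; apply: ereal_sup_ubound; exists (dX x y) => //.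
  by rewrite /= in_itv /= h1 h2.
have GkE z : E0 z -> Gk k z = G z (rk k) by move=> E0z; rewrite /Gk patchE mem_set.
have hQ2 : ((Qf dX dY f x y) `^ p)%:E <= C%:E * (Gk k x + Gk k y).
  rewrite GkE // GkE // ge0_muleDr ?Gk0 //; first last.
    by rewrite -(GkE y E0y) Gk0.
    by rewrite -(GkE x E0x) Gk0.
  by apply: (le_trans hQxy); apply: leeD; apply: gle.
have hg' := @g'rho x y hg.
apply: (@le_trans _ _ ((C%:E * (Gk k x + Gk k y)) * g' (x, y))).
  by rewrite hg'; apply: lee_wpmul2r => //; exact: rho0.
rewrite -muleA; apply: lee_wpmul2l => //.
rewrite /Psi; apply: (le_trans _ (@nneseries_ge_term _ (fun i => Pa i (x, y) + Pb i (x, y)) k _)); last first.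
  by move=> i; rewrite adde_ge0 // ?Pa0 // Pb0.
rewrite /Pa /Pb indicE mem_set /=; last by split => //; split.
by rewrite !mul1e ge0_muleDl // Gk0.
Qed.

Lemma inner_bound : {ae mu, forall x, E x ->
  \int[mu]_(y in cball dX x r) (((Qf dX dY f x y) `^ p)%:E * rho x y)
    <= C%:E * \int[mu]_y Psi (x, y)}.
Proof.
have [_ hn _] := hD.
have ae1 := @prod_null_x _ hn.
have ae2 := @prod_null_x _ ng.
have ae3 := nae N3_0.
move: ae1 ae2 ae3; apply: filterS3 => x h1 h2 h3 Ex.
have C0 : (0 <= C)%R by rewrite ltW.
have mPx : measurable_fun setT (fun y => Psi (x, y)) := measurable_fun_pair2 x mPsi.
apply: (@le_trans _ _ (\int[mu]_(y in cball dX x r) (C%:E * Psi (x, y)))).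
  apply: int_le_ae.
  - exact: mcball.
  - by apply: measurable_funeM; apply: measurable_funS mPx.
  - by move=> y _; apply: mule_ge0; [rewrite lee_fin powR_ge0|exact: rho0].
  - by move=> y _; rewrite mule_ge0 // ?lee_fin // Psi0.
  - have b1 := nae h1; have b2 := nae h2; have b3 := nae N3_0.
    move: b1 b2 b3; apply: filterS3 => y k1 k2 k3 bxy.
    apply: pw_bound => //.
      by move=> hh; apply: k1; rewrite /xsection /= inE.
    apply: contrapT => hh; apply: k2; rewrite /xsection /= inE; exact: hh.
apply: (@le_trans _ _ (\int[mu]_y (C%:E * Psi (x, y)))).
  apply: ge0_subset_integral => //; first exact: mcball.
    exact: measurable_funeM.
  by move=> y _; rewrite mule_ge0 // ?lee_fin // Psi0.
by rewrite ge0_integralZl_EFin // => y _; exact: Psi0.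
Qed.

Definition ek k := esssup_on m (cballS dX E (rk k))
  (fun x => \int[cmeas m]_(x' in annulus dX x (tau k)) (rho x x' + rho x' x)).

Lemma ek0 k : 0 <= ek k.
Proof. by apply: le_ereal_inf_tmp => t []. Qed.

Definition Hk k (x y : U) :=
  (\1_(annulus dX x (tau k) : set U) y)%:E * (g' (x, y) + g' (y, x)).

Lemma mann x k : measurable (annulus dX x (tau k) : set U).
Proof. by have := mdist_x x measurableT _ (tau_meas k); rewrite setTI. Qed.

Lemma mg'x x : measurable_fun setT (fun y : U => g' (x, y) + g' (y, x)).
Proof.
apply: emeasurable_funD; first exact: measurable_fun_pair2 x mg'.
exact: measurable_fun_pair1 x mg'.
Qed.

Lemma mHk k x : measurable_fun setT (Hk k x).
Proof.
apply: emeasurable_funM; last exact: mg'x.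
by apply/measurable_EFinP; apply: measurable_indic; exact: mann.
Qed.

Lemma Hk0 k x y : 0 <= Hk k x y.
Proof. by rewrite /Hk mule_ge0 // ?lee_fin // adde_ge0 // g'0. Qed.

Lemma Hk_le k : {ae mu, forall x, cballS dX E (rk k) x -> \int[mu]_y Hk k x y <= ek k}.
Proof.
have ae1 := @prod_null_x _ ng.
have ae2 := @prod_null_y _ ng.
have ae3 := nae (@esssup_attained R T m (cballS dX E (rk k))
  (fun x => \int[cmeas m]_(x' in annulus dX x (tau k)) (rho x x' + rho x' x))).
move: ae1 ae2 ae3; apply: filterS3 => x h1 h2 h3 cbx.
have -> : \int[mu]_y Hk k x y =
    \int[mu]_(y in annulus dX x (tau k)) (g' (x, y) + g' (y, x)).
  rewrite [RHS]integral_mkcond; apply: eq_integral => y _.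
  rewrite /Hk indicE patchE; case: (y \in _) => /=; first by rewrite mul1e.
  by rewrite mul0e.
rewrite -(@int_ae_eq R T m _ (fun y => rho x y + rho y x)) //.
- rewrite leNgt; apply/negP => hlt; apply: h3; split => //.
- exact: mann.
- exact: measurable_funS (mg'x x).
- have b1 := nae h1; have b2 := nae h2.
  move: b1 b2; apply: filterS2 => y k1 k2 _.
  have e1 : rho x y = g (x, y).
    by apply: contrapT => hh; apply: k1; rewrite /xsection /= inE.
  have e2 : rho y x = g (y, x).
    by apply: contrapT => hh; apply: k2; rewrite /ysection /= inE.
  by rewrite (@g'rho x y e1) (@g'rho y x e2).
Qed.

Lemma E_cb k x : E x -> cballS dX E (rk k) x.
Proof.
move=> Ex; rewrite /cballS /dist_set /=; apply: ge_ereal_inf.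
exists (dX x x)%:E; first by exists x.
by have := (deq0 x x).2 erefl => ->; rewrite lee_fin ltW // (rk_pos k).1.
Qed.

Lemma cb_of k x y : E y -> (dX y x <= rk k)%R -> cballS dX E (rk k) x.
Proof.
move=> Ey h; rewrite /cballS /dist_set /=; apply: ge_ereal_inf.
by exists (dX y x)%:E; [exists y|rewrite lee_fin].
Qed.

Lemma indic_le (A : set (U * U)) z (v : \bar R) : 0 <= v -> (\1_A z)%:E * v <= v.
Proof. by move=> v0; rewrite indicE; case: (z \in A) => /=; rewrite ?mul1e ?mul0e. Qed.

Lemma indic0 (A : set (U * U)) z (v : \bar R) : ~ A z -> (\1_A z)%:E * v = 0.
Proof. by move=> nA; rewrite indicE memNset // mul0e. Qed.

Lemma Pab_le k x y :
  Pa k (x, y) + Pb k (y, x) <=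
  ((\1_(cballS dX E (rk k) : set U) x)%:E * Gk k x) * Hk k x y.
Proof.
have hr0 : 0 <= ((\1_(cballS dX E (rk k) : set U) x)%:E * Gk k x) * Hk k x y.
  by rewrite mule_ge0 // ?Hk0 // mule_ge0 // ?lee_fin // Gk0.
case: (pselect (cballS dX E (rk k) x)) => cbx; last first.
  rewrite /Pa /Pb !indic0 ?adde0 //; rewrite /Ek /Ak /=; move=> [[Ez _] hz]; apply: cbx;
    first [exact: (@E_cb k x Ez) | apply: (@cb_of k x y Ez); exact: (@tau_le_rk k _ hz)].
rewrite indicE mem_set // mul1e /Hk.
case: (pselect (tau k (dX x y))) => hxy; last first.
  have n1 : ~ Ek k (x, y) by rewrite /Ek /Ak /= => -[_ hh].
  have n2 : ~ Ek k (y, x) by rewrite /Ek /Ak /= => -[_ hh]; apply: hxy; rewrite dsym.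
  rewrite /Pa /Pb !indic0 // adde0.
  by apply: mule_ge0; [exact: Gk0|exact: Hk0].
rewrite indicE mem_set // mul1e ge0_muleDr ?g'0 //.
by apply: leeD; apply: indic_le; apply: mule_ge0; [exact: Gk0|exact: g'0|exact: Gk0|exact: g'0].
Qed.

Lemma intGk_le k : \int[mu]_x Gk k x <= Ssup.
Proof.
rewrite /Gk -integral_mkcond; apply: ereal_sup_ubound.
by exists (rk k) => //; rewrite /= in_itv /= (rk_pos k).1 (rk_pos k).2.
Qed.

Lemma Pk_bound k : \int[mu \x mu]_z (Pa k z + Pb k z) <= ek k * Ssup.
Proof.
have Pa0' : forall z, 0 <= Pa k z := Pa0 k.
have Pb0' : forall z, 0 <= Pb k z := Pb0 k.
rewrite (ge0_integralD _ measurableT (fun z _ => Pa0' z) (mPa k)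
  (fun z _ => Pb0' z) (mPb k)).
rewrite (fubini_tonelli1 (Pa k) (mPa k) Pa0') (fubini_tonelli2 (Pb k) (mPb k) Pb0').
have mF : measurable_fun setT (fubini_F mu (Pa k)) :=
  @measurable_fun_fubini_tonelli_F _ _ _ _ _ mu (Pa k) (mPa k) Pa0'.
have mG : measurable_fun setT (fubini_G mu (Pb k)) :=
  @measurable_fun_fubini_tonelli_G _ _ _ _ _ mu (Pb k) (mPb k) Pb0'.
have F0 : forall x, 0 <= fubini_F mu (Pa k) x.
  by move=> x; apply: integral_ge0 => y _; exact: Pa0.
have G0 : forall x, 0 <= fubini_G mu (Pb k) x.
  by move=> x; apply: integral_ge0 => y _; exact: Pb0.
rewrite -(ge0_integralD _ measurableT (fun x _ => F0 x) mF (fun x _ => G0 x) mG).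
apply: (@le_trans _ _ (\int[mu]_x (Gk k x * ek k))).
  apply: ae_ge0_le_integral => //.
  - by move=> x _; rewrite adde_ge0.
  - exact: (emeasurable_funD mF mG).
  - by move=> x _; rewrite mule_ge0 // ?Gk0 // ek0.
  - by apply: emeasurable_funM; [exact: mGk|exact: measurable_cst].
  case: (Hk_le k) => N [mN N0 hN]; exists N; split => // x /= hx'.
  apply: hN => /= hx; apply: hx' => _.
  rewrite /fubini_F /fubini_G -(ge0_integralD _ measurableT (fun y _ => Pa0' (x, y))
    (measurable_fun_pair2 x (mPa k)) (fun y _ => Pb0' (y, x)) (measurable_fun_pair1 x (mPb k))).
  apply: (@le_trans _ _ (\int[mu]_y
      (((\1_(cballS dX E (rk k) : set U) x)%:E * Gk k x) * Hk k x y))).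
    apply: ge0_le_integral => //.
    - by move=> y _; rewrite adde_ge0 // ?Pa0 // Pb0.
    - apply: emeasurable_funD; first exact: measurable_fun_pair2 x (mPa k).
      exact: measurable_fun_pair1 x (mPb k).
    - exact: measurable_funeM (mHk k x).
    - by move=> y _; exact: Pab_le.
  rewrite (ge0_integralZl _ measurableT (mHk k x)); last 2 first.
    - by move=> y _; exact: Hk0.
    - by rewrite mule_ge0 // ?lee_fin // Gk0.
  case: (pselect (cballS dX E (rk k) x)) => cbx.
    by rewrite indicE mem_set // mul1e; apply: lee_wpmul2l; [exact: Gk0|exact: hx].
  by rewrite indicE memNset // !mul0e; apply: mule_ge0; [exact: Gk0|exact: ek0].
rewrite (ge0_integralZr _ measurableT (mGk k)); last 2 first.
  - by move=> x _; exact: Gk0.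
  - exact: ek0.
by rewrite muleC; apply: lee_wpmul2l; [exact: ek0|exact: intGk_le].
Qed.

Lemma tau_bound :
  \int[cmeas m]_(x in E)
      \int[cmeas m]_(x' in cball dX x r) (((Qf dX dY f x x') `^ p)%:E * rho x x')
  <= C%:E * IU_tau m dX E rho tau * Ssup.
Proof.
rewrite /cmeas.
have C0 : (0 <= C)%R by rewrite ltW.
have mF : measurable_fun setT (fubini_F mu Psi) :=
  @measurable_fun_fubini_tonelli_F _ _ _ _ _ mu Psi mPsi Psi0.
have F0 x : 0 <= fubini_F mu Psi x by apply: integral_ge0 => y _; exact: Psi0.
apply: (@le_trans _ _ (\int[mu]_(x in E) (C%:E * fubini_F mu Psi x))).
  apply: int_le_ae => //.
  - by apply: measurable_funeM; apply: measurable_funS mF.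
  - move=> x _; apply: integral_ge0 => y _.
    by apply: mule_ge0; [rewrite lee_fin powR_ge0|exact: rho0].
  - by move=> x _; rewrite mule_ge0 // lee_fin.
  - exact: inner_bound.
apply: (@le_trans _ _ (\int[mu]_x (C%:E * fubini_F mu Psi x))).
  apply: ge0_subset_integral => //; first exact: measurable_funeM.
  by move=> x _; rewrite mule_ge0 // lee_fin.
rewrite (ge0_integralZl_EFin _ measurableT (fun x _ => F0 x) mF C0).
rewrite -(fubini_tonelli1 Psi mPsi Psi0) /Psi.
rewrite integral_nneseries //; last 2 first.
  - by move=> k; apply: emeasurable_funD; [exact: mPa|exact: mPb].
  - by move=> k z _; rewrite adde_ge0 // ?Pa0 // Pb0.
rewrite /IU_tau -muleA; apply: lee_wpmul2l; first by rewrite lee_fin.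
apply: (@le_trans _ _ (\sum_(k <oo) (ek k * Ssup))).
  apply: lee_nneseries; last by move=> k _; exact: Pk_bound.
  by move=> k _ _; apply: integral_ge0 => z _; rewrite adde_ge0 // ?Pa0 // Pb0.
apply: nneseries_mulr; first exact: ek0.
exact: (le_trans (integral_ge0 _ (fun x _ => Gk0 0 x)) (intGk_le 0)).
Qed.

Lemma edge_tau : {ae mu, forall x, E x ->
  \int[mu]_y ((\1_(Bx x) y)%:E * g' (x, y)) <= IU_tau m dX E rho tau}.
Proof.
case: (@ae_bigcup _ _ _ mu (fun k x => cballS dX E (rk k) x ->
    \int[mu]_y Hk k x y <= ek k) (fun k => Hk_le k)) => N [mN N0 hN].
exists N; split => // x /= hx'; apply: hN => /= hx; apply: hx' => Ex.
have mS : measurable_fun setT (fun y => \sum_(k <oo) Hk k x y).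
  have := @ge0_emeasurable_sum _ _ _ setT (fun k y => Hk k x y) xpredT.
  apply; first by move=> k y _ _; exact: Hk0.
  by move=> k _; exact: mHk.
apply: (@le_trans _ _ (\int[mu]_y \sum_(k <oo) Hk k x y)).
  apply: ge0_le_integral => //.
  - by move=> y _; rewrite mule_ge0 // ?lee_fin // g'0.
  - apply: emeasurable_funM; last exact: measurable_fun_pair2 x mg'.
    by apply/measurable_EFinP; apply: measurable_indic; exact: mBx.
  - move=> y _; rewrite indicE; case: (boolP (y \in Bx x)) => yB; last first.
      by rewrite mul0e; apply: nneseries_ge0 => k _ _; exact: Hk0.
    rewrite mul1e; have := set_mem yB; rewrite /Bx /= in_itv /= => /andP[h1 h2].
    have [k hk] : exists k, tau k (dX x y) by apply: tau_cover; rewrite h1 h2.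
    apply: (le_trans _ (@nneseries_ge_term _ (fun k => Hk k x y) k (fun k => Hk0 k x y))).
    by rewrite /Hk indicE mem_set // mul1e leeDl // g'0.
rewrite integral_nneseries //; last 2 first.
  - by move=> k; exact: mHk.
  - by move=> k y _; exact: Hk0.
apply: lee_nneseries; last by move=> k _; apply: hx; exact: E_cb.
by move=> k _ _; apply: integral_ge0 => y _; exact: Hk0.
Qed.

End tau.
Lemma edge_zero : IU m dX E r rho = 0 ->
  \int[cmeas m]_(x in E)
      \int[cmeas m]_(x' in cball dX x r) (((Qf dX dY f x x') `^ p)%:E * rho x x')
  <= 0.
Proof.
move=> I0; rewrite /cmeas.
have hn n : exists tau, PU r tau /\ IU_tau m dX E rho tau < (n.+1%:R^-1)%:E.
  have : IU m dX E r rho < (n.+1%:R^-1)%:E by rewrite I0 lte_fin invr_gt0.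
  by case/ereal_inf_lt => _ [tau ht <-] hl; exists tau.
have /choice [taus hts] := hn.
have ae1 := @ae_bigcup _ _ _ mu (fun n x => E x ->
    \int[mu]_y ((\1_(Bx x) y)%:E * g' (x, y)) <= IU_tau m dX E rho (taus n))
  (fun n => edge_tau _ (hts n).1).
have ae2 := @prod_null_x _ ng.
have p0 : p != 0%R by apply/eqP => h; move: hp; rewrite h; lra.
apply: (@le_trans _ _ (\int[mu]_(x in E) (cst 0 x))); last by rewrite integral0.
apply: int_le_ae => //.
- move=> x _; apply: integral_ge0 => y _.
  by apply: mule_ge0; [rewrite lee_fin powR_ge0|exact: rho0].
- move: ae1 ae2; apply: filterS2 => x h1 h2 Ex.
  have mBg : measurable_fun setT (fun y => (\1_(Bx x) y)%:E * g' (x, y)).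
    apply: emeasurable_funM; last exact: measurable_fun_pair2 x mg'.
    by apply/measurable_EFinP; apply: measurable_indic; exact: mBx.
  have Bg0 y : 0 <= (\1_(Bx x) y)%:E * g' (x, y) by rewrite mule_ge0 // ?lee_fin // g'0.
  have I0x : \int[mu]_y ((\1_(Bx x) y)%:E * g' (x, y)) = 0.
    apply/eqP; rewrite eq_le integral_ge0 ?andbT; last by move=> y _; exact: Bg0.
    apply/lee_addgt0Pr => e e0; rewrite add0e.
    have [n hn'] := @exists_natSinv _ _ e0.
    apply: (le_trans (h1 n Ex)); apply: ltW; apply: (lt_trans (hts n).2).
    by rewrite lte_fin.
  have aey : ae_eq mu setT (fun y => (\1_(Bx x) y)%:E * g' (x, y)) (cst 0).
    apply/(ae_eq_integral_abs _ measurableT mBg); rewrite -I0x.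
    by apply: eq_integral => y _; rewrite gee0_abs.
  apply: (@le_trans _ _ (\int[mu]_(y in cball dX x r) (cst 0 y))); last by rewrite integral0.
  apply: int_le_ae => //.
  + exact: mcball.
  + by move=> y _; apply: mule_ge0; [rewrite lee_fin powR_ge0|exact: rho0].
  + have b2 := nae h2; move: aey b2; apply: filterS2 => y hy k2 bxy.
    case: (pselect (y = x)) => [->|yx].
      by rewrite /Qf asboolT // powR0 // mul0e.
    have e1 : rho x y = g (x, y).
      by apply: contrapT => hh; apply: k2; rewrite /xsection /= inE.
    have dpos : (0 < dX x y)%R.
      rewrite lt_neqAle dge0 andbT; apply/eqP => h; apply: yx; symmetry.
      by apply/deq0; rewrite -h.
    have yB : Bx x y by rewrite /Bx /= in_itv /= dpos; exact: bxy.
    have := hy I; rewrite indicE mem_set // mul1e => g0.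
    by rewrite -(@g'rho x y e1) g0 mule0.
Qed.

Lemma PU_ne : exists tau, PU r tau.
Proof.
have r0' := r0.
exists (fun k => `[(r / k.+2%:R)%R, (r / k.+1%:R)%R]%classic).
have hk k : (r / k.+2%:R <= r / k.+1%:R)%R.
  by apply: ler_wpM2l; [exact: ltW|rewrite lef_pV2 ?posrE ?ltr0n // ler_nat].
split.
- move=> k; split.
  + split; first by exists (r / k.+2%:R)%R; rewrite /= in_itv /= lexx hk.
    move=> a b c; rewrite /= !in_itv /= => /andP[ha _] /andP[_ hb] /andP[hac hcb].
    by rewrite (le_trans ha hac) (le_trans hcb hb).
  + move=> t; rewrite /= !in_itv /= => /andP[h1 h2].
    rewrite (lt_le_trans _ h1) ?divr_gt0 ?ltr0n //=.
    apply: (le_trans h2); rewrite ler_pdivrMr ?ltr0n //.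
    have : (1 <= k.+1%:R :> R)%R by rewrite ler1n.
    nra.
  + rewrite sup_itvcc // inf_itvcc //.
    rewrite mulrA ler_pdivrMr ?ltr0n // mulrAC ler_pdivlMr ?ltr0n //.
    have : (k.+2%:R = k.+1%:R + 1 :> R)%R by rewrite -natr1.
    have : (1 <= k.+1%:R :> R)%R by rewrite ler1n.
    nra.
- move=> t; rewrite /= in_itv /= => /andP[t0 tr].
  have rt0 : (0 <= r / t)%R by rewrite divr_ge0 // ltW.
  have := truncn_itv rt0; set n := Num.truncn (r / t) => /andP[hn1 hn2].
  have rt1 : (1 <= r / t)%R by rewrite ler_pdivlMr // mul1r.
  have n0 : (0 < n)%N.
    have : (1 < n.+1%:R :> R)%R by apply: le_lt_trans hn2.
    by rewrite ltr1n.
  exists n.-1 => //; rewrite /= in_itv /= prednK //; apply/andP; split.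
    rewrite ler_pdivrMr ?ltr0n //; move: hn2; rewrite ltr_pdivrMr //.
    by move=> h; apply: ltW; rewrite mulrC.
  rewrite ler_pdivlMr ?ltr0n //; move: hn1; rewrite ler_pdivlMr //.
  by rewrite mulrC.
Qed.

Lemma IU_tau0 tau : 0 <= IU_tau m dX E rho tau.
Proof. by apply: nneseries_ge0 => k _ _; exact: ek0. Qed.

Lemma main_r :
  \int[cmeas m]_(x in E)
      \int[cmeas m]_(x' in cball dX x r) (((Qf dX dY f x x') `^ p)%:E * rho x x')
  <= C%:E * IU m dX E r rho *
     ereal_sup [set \int[cmeas m]_(x in E0) G x r' | r' in `]0%R, r%R]].
Proof.
rewrite -/Ssup.
set L := \int[cmeas m]_(x in E) _.
have [tau0 ht0] := PU_ne.
have C0 : 0 <= C%:E by rewrite lee_fin ltW.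
have I0 : 0 <= IU m dX E r rho.
  by apply: le_ereal_inf_tmp => _ [tau _ <-]; exact: IU_tau0.
have S0 : 0 <= Ssup.
  exact: (le_trans (integral_ge0 _ (fun x _ => Gk0 tau0 ht0 0 x)) (intGk_le _ ht0 0)).
move: S0; case hS : Ssup => [s| |] // S0.
- have s0 : (0 <= s)%R by rewrite -lee_fin.
  move: I0; case hI : (IU m dX E r rho) => [i| |] // I0; last first.
    case: (eqVneq s 0%R) => [s00|sn0].
      rewrite s00 mule0; apply: (le_trans (tau_bound _ ht0)).
      by rewrite hS s00 mule0.
    have s0' : 0 < s%:E by rewrite lte_fin lt0r sn0 s0.
    by rewrite gt0_muley ?lte_fin // gt0_mulye // leey.
  apply/lee_addgt0Pr => e e0.
  pose eps := (e / (C * s + 1))%R.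
  have Cs0 : (0 <= C * s)%R by rewrite mulr_ge0 // ltW.
  have eps0 : (0 < eps)%R by rewrite divr_gt0 //; lra.
  have hpos : (0 < C * s + 1)%R by lra.
  have epsE : (eps * (C * s + 1) = e)%R by rewrite /eps mulfVK // gt_eqF.
  have : IU m dX E r rho < (i + eps)%:E by rewrite hI lte_fin ltrDl.
  case/ereal_inf_lt => _ [tau ht <-] hlt.
  apply: (le_trans (tau_bound _ ht)); rewrite hS.
  have := IU_tau0 tau; move: hlt; case: (IU_tau m dX E rho tau) => [v| |] //.
  rewrite !lte_fin lee_fin => hv v0.
  rewrite -!EFinM -EFinD lee_fin.
  have i0 : (0 <= i)%R by rewrite -lee_fin.
  have : (0 <= C * s * (i + eps - v))%R by rewrite mulr_ge0 //; lra.
  nra.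
- case: (eqVneq (IU m dX E r rho) 0) => [I00|In0].
    by rewrite I00 mule0 mul0e; exact: edge_zero.
  rewrite gt0_muley ?leey //; rewrite mule_gt0 // ?lte_fin //.
  by rewrite lt0e In0 I0.
Qed.

End main.

Local Close Scope ereal_scope.
Local Open Scope ring_scope.

Theorem proposition3p6
  (R : realType) (T : pointedType) (dX : T -> T -> R)
  (m : {outer_measure set T -> \bar R})
  (* standing assumptions on (X, d, m) *)
  (hdX : is_metric dX) (hsep : separable_set dX setT)
  (hlc : locally_complete dX) (hdiam : positive_diameter dX)
  (hborel : forall U, dopen dX U -> mmeasurable m U)
  (hlocfin : forall x, exists r : R, 0 < r /\ (m (cball dX x r) < +oo)%E)
  (hmpos : (0 < m setT)%E)
  (* data *)
  (p : R) (hp : 1 <= p)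
  (rho : T -> T -> \bar R) (hrho : MplusXX m rho)
  (E0 : set T) (hE0 : mmeasurable m E0)
  (Y : Type) (dY : Y -> Y -> R) (hdY : is_metric dY)
  (f : T -> Y) (hf : Mmaps m dY E0 f)
  (E : set T) (hE : mmeasurable m E) (hEE0 : relcompact_in dX E E0)
  (Rr : R) (hRr : 0 < Rr) (hBE : cballS dX E Rr `<=` E0)
  (G : T -> R -> \bar R)
  (hG0 : forall (x : T) (r : R), E0 x -> 0 < r <= Rr -> (0 <= G x r)%E)
  (hGi : forall r : R, 0 < r <= Rr ->
     measurable_fun (E0 : set (caratheodory_type m))
       (fun x : caratheodory_type m => G x r))
  (C : R) (hC : 0 < C)
  (hGii : forall r : R, 0 < r <= Rr ->
     m [set x | E0 x /\
        ~ (ereal_sup [set G x r' | r' in `[(r / 2)%R, r%R]] <= C%:E * G x r)%E]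
     = 0%E)
  (hGiii : exists D : set (T * T),
     [/\ D `<=` E0 `*` E0, prod_null m ((E0 `*` E0) `\` D) &
         forall x x', D (x, x') -> E x -> cball dX x Rr x' -> x' <> x ->
           (((Qf dX dY f x x') `^ p)%:E <= G x (dX x x') + G x' (dX x x'))%E]) :
  forall r : R, 0 < r <= Rr ->
    (\int[cmeas m]_(x in E)
        \int[cmeas m]_(x' in cball dX x r) (((Qf dX dY f x x') `^ p)%:E * rho x x')
     <= C%:E * IU m dX E r rho *
        ereal_sup [set \int[cmeas m]_(x in E0) G x r' | r' in `]0%R, r%R]])%E.
Proof.
move=> r hr.
have sfin := @sigma_fin R T dX hdX m hborel hsep hlocfin.
exact: (@main_r R T dX m sfin hdX hsep hborel p hp rho hrho E0 hE0 Y dY f E hE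
  hEE0 Rr hBE G hG0 hGi C hC hGii hGiii r hr).
Qed.
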